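(* Within the pseudovariety $\mathsf S$ of all finite semigroups, each of the sets of pseudoidentities $\Sigma=\{(xyx)^\omega=x^\omega,\ x^{\omega+1}=x\}$ and $\Gamma=\{(xy)^\omega x=x\}$ is h-strong.
   Context: $\mathsf S$ is the pseudovariety of finite semigroups (signature: multiplication); $\Omega_A\mathsf S$ is the free profinite semigroup on a finite set $A$. In a profinite semigroup $x^\omega=\lim x^{n!}$ and $x^{\omega+1}=x^\omega x$. An $\mathsf S$-pseudoidentity is $u=v$ with $u,v\in\Omega_B\mathsf S$, $B$ finite; it holds in a finite semigroup $T$ if both sides agree under every continuous homomorphism $\Omega_B\mathsf S\to T$; $[\![\Sigma]\!]$ is the class of finite semigroups satisfying $\Sigma$. Provability: for finite $A$, $\Sigma_0\subseteq\Omega_A\mathsf S\times\Omega_A\mathsf S$ is the set of pairs $(\mathbf t(\varphi(u),w_1,\dots,w_n),\mathbf t(\varphi(v),w_1,\dots,w_n))$ with $u=v$ or $v=u$ in $\Sigma$ ($u,v\in\Omega_B\mathsf S$), $\varphi:\Omega_B\mathsf S\to\Omega_A\mathsf S$ a continuous homomorphism, $\mathbf t$ a semigroup term, $w_i\in\Omega_A\mathsf S$; $\Sigma_{2\alpha+1}$ is the transitive closure of $\Sigma_{2\alpha}$, $\Sigma_{2\alpha+2}$ the topological closure of $\Sigma_{2\alpha+1}$, unions at limit ordinals; $u=v$ is provable from $\Sigma$ if $(u,v)\in\bigcup_\alpha\Sigma_\alpha$. $\Sigma$ is h-strong within $\mathsf S$ if every $\mathsf S$-pseudoidentity valid in $[\![\Sigma]\!]$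 is provable from $\Sigma$. *)

(* Defs.v *)
From mathcomp Require Import all_boot.
Set Implicit Arguments.
Unset Strict Implicit.
Unset Printing Implicit Defensive.

(* Finite semigroups with carrier 'I_n (every finite semigroup is isomorphic
   to one of these). *)
Record fsg := FSg {
  fsg_n : nat;
  fsg_mul : 'I_fsg_n -> 'I_fsg_n -> 'I_fsg_n;
  fsg_assoc : associative fsg_mul }.

Definition shom (S1 S2 : fsg) (h : 'I_(fsg_n S1) -> 'I_(fsg_n S2)) :=
  forall x y, h (fsg_mul x y) = fsg_mul (h x) (h y).

Definition natural (A : Type)
  (f : forall S : fsg, (A -> 'I_(fsg_n S)) -> 'I_(fsg_n S)) :=
  forall (S1 S2 : fsg) (h : 'I_(fsg_n S1) -> 'I_(fsg_n S2)),
    shom h -> forall a, h (f S1 a) = f S2 (h \o a).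

(* Omega_A S : the free profinite semigroup on A, realised (Reiterman) as the
   set of A-ary implicit operations on S, with the product topology of
   prod_{(S,a)} S (each finite S discrete). *)
Definition Om (A : finType) :=
  {f : forall S : fsg, (A -> 'I_(fsg_n S)) -> 'I_(fsg_n S) | natural f}.

Definition ev (A : finType) (u : Om A) (S : fsg) (a : A -> 'I_(fsg_n S)) :=
  proj1_sig u S a.

Definition coord (A : finType) := {S : fsg & A -> 'I_(fsg_n S)}.
Definition evc (A : finType) (u : Om A) (c : coord A) := ev u (projT2 c).

(* u and v agree on all coordinates of the finite list L (basic nbhds) *)
Fixpoint agree (A : finType) (L : seq (coord A)) (u v : Om A) : Prop :=
  match L with
  | [::] => True
  | c :: L' => evc u c = evc v c /\ agree L' u v
  end.

Lemma om_mul_natural (A : finType) (u v : Om A) :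
  natural (fun S a => fsg_mul (ev u a) (ev v a)).
Proof.
move=> S1 S2 h hh a; rewrite hh /ev.
by rewrite (proj2_sig u _ _ _ hh) (proj2_sig v _ _ _ hh).
Qed.

Definition om_mul (A : finType) (u v : Om A) : Om A :=
  exist _ _ (om_mul_natural u v).

Lemma om_var_natural (A : finType) (b : A) :
  natural (fun S (a : A -> 'I_(fsg_n S)) => a b).
Proof. by []. Qed.

Definition om_var (A : finType) (b : A) : Om A := exist _ _ (om_var_natural b).

(* om_pow u n = u^(n+1) *)
Fixpoint om_pow (A : finType) (u : Om A) (n : nat) : Om A :=
  match n with 0 => u | n'.+1 => om_mul (om_pow u n') u end.

Definition converges (A : finType) (s : nat -> Om A) (l : Om A) :=
  forall c : coord A, exists N, forall k, N <= k -> evc (s k) c = evc l c.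

(* e = u^omega = lim u^(k!) *)
Definition is_omega (A : finType) (u e : Om A) :=
  converges (fun k => om_pow u (k`!).-1) e.

Definition is_hom (B A : finType) (phi : Om B -> Om A) :=
  forall u v, phi (om_mul u v) = om_mul (phi u) (phi v).
Definition is_cont (B A : finType) (phi : Om B -> Om A) :=
  forall (c : coord A) (u : Om B), exists L : seq (coord B),
    forall u', agree L u' u -> evc (phi u') c = evc (phi u) c.

Definition is_homT (B : finType) (T : Type) (mul : T -> T -> T) (f : Om B -> T) :=
  forall u v, f (om_mul u v) = mul (f u) (f v).
Definition is_contT (B : finType) (T : Type) (f : Om B -> T) :=
  forall u : Om B, exists L : seq (coord B), forall u', agree L u' u -> f u' = f u.

Definition pid := {B : finType & (Om B * Om B)%type}.

Definition holds (T : finType) (mul : T -> T -> T) (B : finType) (u v : Om B) :=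
  forall f : Om B -> T, is_homT mul f -> is_contT f -> f u = f v.

Definition models (T : finType) (mul : T -> T -> T) (Sigma : pid -> Prop) :=
  forall p : pid, Sigma p -> holds mul (projT2 p).1 (projT2 p).2.

(* semigroup terms t(z, w_1, ..., w_n): leaves are the hole z or some w_i *)
Inductive sterm (A : finType) :=
  | Hole
  | Lf of Om A
  | Mu of sterm A & sterm A.

Fixpoint st_eval (A : finType) (t : sterm A) (z : Om A) : Om A :=
  match t with
  | Hole => z
  | Lf w => w
  | Mu t1 t2 => om_mul (st_eval t1 z) (st_eval t2 z)
  end.

Definition Sigma0 (Sigma : pid -> Prop) (A : finType) (u v : Om A) :=
  exists (q : pid) (phi : Om (projT1 q) -> Om A) (t : sterm A),
    [/\ Sigma q, is_hom phi, is_cont phi &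
      ((u = st_eval t (phi (projT2 q).1) /\ v = st_eval t (phi (projT2 q).2))
       \/ (u = st_eval t (phi (projT2 q).2) /\ v = st_eval t (phi (projT2 q).1)))].

(* provability: the union over all ordinals alpha of Sigma_alpha, i.e. the
   least relation containing Sigma_0 closed under transitive closure and
   topological closure in Omega_A S x Omega_A S. *)
Inductive provable (Sigma : pid -> Prop) (A : finType) : Om A -> Om A -> Prop :=
  | pr_base u v : Sigma0 Sigma u v -> provable Sigma u v
  | pr_trans u v w : provable Sigma u v -> provable Sigma v w -> provable Sigma u w
  | pr_clos u v :
      (forall L : seq (coord A), exists u' v',
          [/\ provable Sigma u' v', agree L u' u & agree L v' v]) ->
      provable Sigma u v.

Definition h_strong (Sigma : pid -> Prop) :=
  forall (A : finType) (u v : Om A),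
    (forall (T : finType) (mul : T -> T -> T), associative mul ->
       models mul Sigma -> holds mul u v) ->
    provable Sigma u v.

Definition mkpid (B : finType) (u v : Om B) : pid := existT _ B (u, v).

Definition SigmaSet (p : pid) : Prop :=
  (exists e1 e2 : Om bool,
     [/\ is_omega (om_mul (om_mul (om_var true) (om_var false)) (om_var true)) e1,
         is_omega (om_var true) e2 & p = mkpid e1 e2])
  \/ (exists e : Om unit,
     is_omega (om_var tt) e /\ p = mkpid (om_mul e (om_var tt)) (om_var tt)).

Definition GammaSet (p : pid) : Prop :=
  exists e : Om bool,
    is_omega (om_mul (om_var true) (om_var false)) e
    /\ p = mkpid (om_mul e (om_var true)) (om_var true).

(* Main.v *)
Require Import Defs.
From mathcomp Require Import all_boot.
From mathcomp Require Import zify.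
From Stdlib Require Import ClassicalEpsilon ProofIrrelevance FunctionalExtensionality.
Set Implicit Arguments.
Unset Strict Implicit.
Unset Printing Implicit Defensive.

Section Pw.
Variables (T : finType) (mul : T -> T -> T) (mulA : associative mul).

Fixpoint pw (s : T) (k : nat) : T :=
  match k with 0 => s | k'.+1 => mul (pw s k') s end.

Definition idem (x : T) := mul x x = x.

Lemma pw_add s i j : mul (pw s i) (pw s j) = pw s (i + j).+1.
Proof.
elim: j => [|j IH] /=; first by rewrite addn0.
by rewrite mulA IH addnS.
Qed.

Lemma pw_addl s j : mul s (pw s j) = pw s j.+1.
Proof. by rewrite -[s in mul s _]/(pw s 0) pw_add. Qed.

Lemma pw_comm s i j : mul (pw s i) (pw s j) = mul (pw s j) (pw s i).
Proof. by rewrite !pw_add addnC. Qed.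

Lemma pw_pw s i j : pw (pw s i) j = pw s (i.+1 * j.+1).-1.
Proof.
elim: j => [|j IH]; first by rewrite /= muln1.
rewrite [LHS]/= IH pw_add.
have -> : (i.+1 * j.+2).-1 = ((i.+1 * j.+1).-1 + i).+1.
  rewrite (mulnS i.+1 j.+1); have := muln_gt0 i.+1 j.+1; lia.
by [].
Qed.

Lemma pw_idem x k : idem x -> pw x k = x.
Proof. by move=> hx; elim: k => //= k ->. Qed.

Lemma idem_pw_uniq s i j : idem (pw s i) -> idem (pw s j) -> pw s i = pw s j.
Proof.
move=> hi hj.
by rewrite -{1}(pw_idem j hi) pw_pw mulnC -pw_pw pw_idem.
Qed.

Lemma pw_period s : exists i p, [/\ 0 < p, i < #|T|, p <= #|T| &
  forall m, i <= m -> pw s (m + p) = pw s m].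
Proof.
have : ~~ injectiveb (fun k : 'I_#|T|.+1 => pw s k).
  apply/injectiveP => inj; have := leq_card _ inj.
  by rewrite card_ord ltnn.
move/injectivePn => [k1 [k2 ne eq]].
wlog lt12 : k1 k2 ne eq / k1 < k2.
  move=> W; case: (ltngtP k1 k2) => h; first exact: W h.
  - by apply: (W k2 k1) => //; rewrite eq_sym.
  - by move: ne; rewrite -val_eqE /= h eqxx.
exists k1, (k2 - k1); split.
- by rewrite subn_gt0.
- have := ltn_ord k2; lia.
- have := ltn_ord k2; lia.
move=> m hm; rewrite -(subnKC hm).
elim: (m - k1) => [|d IH].
  by rewrite addn0 subnKC ?(ltnW lt12).
have -> : k1 + d.+1 + (k2 - k1) = (k1 + d + (k2 - k1)).+1 by lia.
by rewrite /= IH addnS.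
Qed.

Lemma pw_periodk s i p m k : (forall m, i <= m -> pw s (m + p) = pw s m) ->
  i <= m -> pw s (m + k * p) = pw s m.
Proof.
move=> hp hm; elim: k => [|k IH]; first by rewrite addn0.
rewrite -[RHS]IH -(hp (m + k * p)); last lia.
by rewrite mulSn; congr (pw _ _); lia.
Qed.

Section Omega.
Variable M : nat.
Hypothesis hM : #|T| <= M.
Let N := M`!.

Lemma N_gt0 : 0 < N. Proof. exact: fact_gt0. Qed.

Lemma pw_periodN s : exists i, i < N /\ forall m, i <= m -> pw s (m + N) = pw s m.
Proof.
have [i [p [p0 iT pT hp]]] := pw_period s.
exists i; split.
  have := fact_geq M; lia.
move=> m0 hm0; have /dvdnP [k ->] : p %| N by apply: dvdn_fact; rewrite p0 /=; lia.
exact: (pw_periodk k hp hm0).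
Qed.

Lemma om_idem s : idem (pw s N.-1).
Proof.
have [i [iN hp]] := pw_periodN s.
rewrite /idem pw_add.
have -> : (N.-1 + N.-1).+1 = N.-1 + N by have := N_gt0; lia.
apply: hp; lia.
Qed.

Lemma om_pwk s k : idem (pw s k) -> pw s k = pw s N.-1.
Proof. by move=> h; apply: idem_pw_uniq => //; apply: om_idem. Qed.

Definition omg s := pw s N.-1.
Definition inv s := pw s (N.*2).-2.

Lemma mul_inv s : mul s (inv s) = omg s.
Proof.
rewrite /inv /omg pw_addl.
have [i [iN hp]] := pw_periodN s.
have -> : (N.*2).-2.+1 = N.-1 + N by have := N_gt0; lia.
apply: hp; lia.
Qed.

Lemma inv_mul s : mul (inv s) s = omg s.
Proof. by rewrite -mul_inv /inv -{2}[s]/(pw s 0) pw_comm. Qed.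

Lemma omg_mul s : mul (omg s) s = mul s (omg s).
Proof. by rewrite /omg -{2 4}[s]/(pw s 0) pw_comm. Qed.

Lemma inv_omg s : mul (inv s) (omg s) = inv s.
Proof.
rewrite /inv /omg pw_add.
have [i [iN hp]] := pw_periodN s.
have -> : ((N.*2).-2 + N.-1).+1 = (N.*2).-2 + N by have := N_gt0; lia.
apply: hp; lia.
Qed.

End Omega.

Definition pinv s y := exists k, [/\ y = pw s k, idem (pw s k.+1) & mul y (pw s k.+1) = y].

Lemma pinv_uniq s y1 y2 : pinv s y1 -> pinv s y2 -> y1 = y2.
Proof.
move=> [k1 [-> i1 e1]] [k2 [-> i2 e2]].
have E := idem_pw_uniq i1 i2.
transitivity (mul (pw s k1) (pw s k2.+1)); first by rewrite -E e1.
rewrite pw_add (_ : (k1 + k2.+1) = (k2 + k1.+1)); last lia.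
by rewrite -pw_add E e2.
Qed.

Lemma inv_pinv M s : #|T| <= M -> pinv s (inv M s).
Proof.
move=> hM; exists (M`!.*2).-2; split => //.
  by rewrite -pw_addl mul_inv //; apply: om_idem.
by rewrite -pw_addl mul_inv // inv_omg.
Qed.

End Pw.

Lemma pw_hom (T1 T2 : finType) (mul1 : T1 -> T1 -> T1) (mul2 : T2 -> T2 -> T2)
  (h : T1 -> T2) : (forall x y, h (mul1 x y) = mul2 (h x) (h y)) ->
  forall s k, h (pw mul1 s k) = pw mul2 (h s) k.
Proof. by move=> hh s; elim=> //= k <-; rewrite hh. Qed.

Lemma idem_hom (T1 T2 : finType) (mul1 : T1 -> T1 -> T1) (mul2 : T2 -> T2 -> T2)
  (h : T1 -> T2) : (forall x y, h (mul1 x y) = mul2 (h x) (h y)) ->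
  forall x, idem mul1 x -> idem mul2 (h x).
Proof. by move=> hh x; rewrite /idem -hh => ->. Qed.

Lemma omg_hom (T1 T2 : finType) (mul1 : T1 -> T1 -> T1) (mul2 : T2 -> T2 -> T2)
  (mulA1 : associative mul1) (mulA2 : associative mul2)
  (h : T1 -> T2) M1 M2 : #|T1| <= M1 -> #|T2| <= M2 ->
  (forall x y, h (mul1 x y) = mul2 (h x) (h y)) ->
  forall s, h (omg mul1 M1 s) = omg mul2 M2 (h s).
Proof.
move=> h1 h2 hh s; rewrite /omg (pw_hom hh); apply: om_pwk => //.
by rewrite -(pw_hom hh); apply: idem_hom => //; apply: om_idem.
Qed.

Lemma inv_hom (T1 T2 : finType) (mul1 : T1 -> T1 -> T1) (mul2 : T2 -> T2 -> T2)
  (mulA1 : associative mul1) (mulA2 : associative mul2)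
  (h : T1 -> T2) M1 M2 : #|T1| <= M1 -> #|T2| <= M2 ->
  (forall x y, h (mul1 x y) = mul2 (h x) (h y)) ->
  forall s, h (inv mul1 M1 s) = inv mul2 M2 (h s).
Proof.
move=> h1 h2 hh s; apply: (pinv_uniq mulA2); last exact: inv_pinv.
have [k [e i m]] := inv_pinv mulA1 s h1.
exists k; split.
- by rewrite e (pw_hom hh).
- by rewrite -(pw_hom hh); apply: idem_hom.
- by rewrite -(pw_hom hh) -hh m.
Qed.

Lemma om_ext (A : finType) (u v : Om A) : (forall S a, ev u (S:=S) a = ev v a) -> u = v.
Proof.
case: u => [f fn]; case: v => [g gn] /= h.
have fg : f = g.
  apply: functional_extensionality_dep => S; apply: functional_extensionality => a.
  exact: h.
subst g; congr exist; exact: proof_irrelevance.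
Qed.

Section FsgT.
Variables (T : finType) (mul : T -> T -> T) (mulA : associative mul).
Definition fmul (i j : 'I_#|T|) : 'I_#|T| := enum_rank (mul (enum_val i) (enum_val j)).
Lemma fmulA : associative fmul.
Proof. by move=> i j k; rewrite /fmul !enum_rankK mulA. Qed.
Definition fsgT : fsg := @FSg #|T| fmul fmulA.
Lemma enc_hom x y : enum_rank (mul x y) = fsg_mul (f:=fsgT) (enum_rank x) (enum_rank y).
Proof. by rewrite /= /fmul !enum_rankK. Qed.
Lemma dec_hom (i j : 'I_(fsg_n fsgT)) : enum_val (fsg_mul i j) = mul (enum_val i) (enum_val j).
Proof. by rewrite /= /fmul enum_rankK. Qed.
End FsgT.

Lemma card_fsg (S : fsg) : #|'I_(fsg_n S)| <= fsg_n S.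
Proof. by rewrite card_ord. Qed.

Section OmOps.
Variable A : finType.

Lemma om_omega_nat (u : Om A) :
  natural (fun S a => omg (@fsg_mul S) (fsg_n S) (ev u (S:=S) a)).
Proof.
move=> S1 S2 h hh a.
rewrite (omg_hom (@fsg_assoc S1) (@fsg_assoc S2) (card_fsg S1) (card_fsg S2) hh).
by rewrite /ev (proj2_sig u _ _ _ hh).
Qed.
Definition om_omega (u : Om A) : Om A := exist _ _ (om_omega_nat u).

Lemma om_inv_nat (u : Om A) :
  natural (fun S a => inv (@fsg_mul S) (fsg_n S) (ev u (S:=S) a)).
Proof.
move=> S1 S2 h hh a.
rewrite (inv_hom (@fsg_assoc S1) (@fsg_assoc S2) (card_fsg S1) (card_fsg S2) hh).
by rewrite /ev (proj2_sig u _ _ _ hh).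
Qed.
Definition om_inv (u : Om A) : Om A := exist _ _ (om_inv_nat u).

Section EvT.
Variables (T : finType) (mul : T -> T -> T) (mulA : associative mul).
Definition evT (w : Om A) (a : A -> T) : T :=
  enum_val (ev w (S := fsgT mulA) (fun b => enum_rank (a b))).

Lemma evT_mul u v a : evT (om_mul u v) a = mul (evT u a) (evT v a).
Proof. by rewrite /evT /= dec_hom. Qed.

Lemma evT_var b a : evT (om_var b) a = a b.
Proof. by rewrite /evT /ev /= enum_rankK. Qed.

Lemma evT_omega u a : evT (om_omega u) a = omg mul #|T| (evT u a).
Proof.
rewrite /evT /ev /=.
apply: (omg_hom (fmulA mulA) mulA) => //; [by rewrite card_ord | exact: dec_hom].
Qed.

Lemma evT_inv u a : evT (om_inv u) a = inv mul #|T| (evT u a).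
Proof.
rewrite /evT /ev /=.
apply: (inv_hom (fmulA mulA) mulA) => //; [by rewrite card_ord | exact: dec_hom].
Qed.

Definition crdT (a : A -> T) : coord A := existT _ (fsgT mulA) (fun b => enum_rank (a b)).

Lemma evT_cont a : is_contT (fun w => evT w a).
Proof. by move=> u; exists [:: crdT a] => u' [h _]; rewrite /evT; move: h; rewrite /evc /= => ->. Qed.

Lemma evT_homT a : is_homT mul (fun w => evT w a).
Proof. by move=> u v; exact: evT_mul. Qed.
End EvT.

Lemma evT_nat (T1 T2 : finType) (mul1 : T1 -> T1 -> T1) (mul2 : T2 -> T2 -> T2)
  (mulA1 : associative mul1) (mulA2 : associative mul2) (h : T1 -> T2) :
  (forall x y, h (mul1 x y) = mul2 (h x) (h y)) ->
  forall w a, h (evT mulA1 w a) = evT mulA2 w (fun b => h (a b)).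
Proof.
move=> hh w a.
pose h' (i : 'I_(fsg_n (fsgT mulA1))) : 'I_(fsg_n (fsgT mulA2)) := enum_rank (h (enum_val i)).
have sh : shom h'.
  by move=> x y; rewrite /h' /= /fmul !enum_rankK hh.
have := proj2_sig w _ _ _ sh (fun b => enum_rank (a b)).
rewrite /evT /ev => E.
have -> : (fun b => enum_rank (h (a b))) = h' \o (fun b => enum_rank (a b)).
  by apply: functional_extensionality => b; rewrite /h' /= enum_rankK.
by rewrite -E /h' enum_rankK.
Qed.

Lemma ev_evT (S : fsg) (w : Om A) (a : A -> 'I_(fsg_n S)) :
  ev w a = evT (@fsg_assoc S) w a.
Proof.
have := @evT_nat _ _ _ _ (@fsg_assoc S) (@fsg_assoc S) id (fun _ _ => erefl) w a.
rewrite /evT.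
have sh : shom (S1:=S) (S2:=fsgT (@fsg_assoc S)) enum_rank.
  by move=> x y; exact: enc_hom.
have := proj2_sig w _ _ _ sh a; rewrite /ev => E _.
by rewrite -E enum_rankK.
Qed.

Definition word (x : A) (s : seq A) : Om A :=
  foldl (fun acc y => om_mul acc (om_var y)) (om_var x) s.

Lemma word_rcons x s y : word x (rcons s y) = om_mul (word x s) (om_var y).
Proof. by rewrite /word foldl_rcons. Qed.

Lemma agree_refl (L : seq (coord A)) u : agree L u u.
Proof. by elim: L => //= c L ->. Qed.
Lemma agree_sym (L : seq (coord A)) u v : agree L u v -> agree L v u.
Proof. by elim: L => //= c L IH [-> /IH]. Qed.
Lemma agree_trans (L : seq (coord A)) u v w : agree L u v -> agree L v w -> agree L u w.
Proof. by elim: L => //= c L IH [-> /IH h1] [-> /h1]. Qed.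
Lemma agree_cat (L1 L2 : seq (coord A)) u v : agree (L1 ++ L2) u v <-> agree L1 u v /\ agree L2 u v.
Proof. elim: L1 => /= [|c L IH]; first by tauto. rewrite IH; tauto. Qed.
Lemma agree_mul (L : seq (coord A)) u u' v v' : agree L u u' -> agree L v v' ->
  agree L (om_mul u v) (om_mul u' v').
Proof.
elim: L => //= c L IH [h1 h2] [h3 h4]; split; last exact: IH.
by rewrite /evc /ev /= -/(ev u _) -/(ev u' _) -/(ev v _) -/(ev v' _); move: h1 h3; rewrite /evc => -> ->.
Qed.

End OmOps.

Section Subst.
Variables (B A : finType) (sg : B -> Om A).
Lemma subst_nat (w : Om B) : natural (fun S (a : A -> 'I_(fsg_n S)) => ev w (fun b => ev (sg b) a)).
Proof.
move=> S1 S2 h hh a.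
rewrite /ev (proj2_sig w _ _ _ hh); congr (proj1_sig w _ _).
by apply: functional_extensionality => b /=; rewrite (proj2_sig (sg b) _ _ _ hh).
Qed.
Definition subst (w : Om B) : Om A := exist _ _ (subst_nat w).
Lemma subst_hom : is_hom subst.
Proof. by move=> u v; apply: om_ext. Qed.
Lemma subst_cont : is_cont subst.
Proof.
move=> [S a] u; exists [:: existT _ S (fun b => ev (sg b) a)] => u' [h _].
exact: h.
Qed.
Lemma subst_omega w : subst (om_omega w) = om_omega (subst w).
Proof. by apply: om_ext. Qed.
Lemma subst_var b : subst (om_var b) = sg b.
Proof. by apply: om_ext. Qed.
End Subst.

Lemma om_mulA (A : finType) : associative (@om_mul A).
Proof. by move=> x y z; apply: om_ext => S a; rewrite /ev /= fsg_assoc. Qed.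

Section Density.
Variable A : finType.

Lemma word_cat (x : A) s y t : word x (s ++ y :: t) = om_mul (word x s) (word y t).
Proof.
elim/last_ind: t => [|t z IH]; first by rewrite cats1 word_rcons.
by rewrite -rcons_cons -rcons_cat !word_rcons IH om_mulA.
Qed.

Lemma density1 (S : fsg) (a : A -> 'I_(fsg_n S)) (w : Om A) :
  exists x s, ev (word x s) a = ev w a.
Proof.
pose P p := exists x s, ev (word x s) a = p.
pose pb p : bool := if excluded_middle_informative (P p) then true else false.
have pbP p : reflect (P p) (pb p).
  by rewrite /pb; case: excluded_middle_informative => h; constructor.
pose Wt := {p : 'I_(fsg_n S) | pb p}.
have mcl (p q : Wt) : pb (fsg_mul (val p) (val q)).
  case: p q => [p /pbP [x [s hp]]] [q /pbP [y [t hq]]] /=.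
  apply/pbP; exists x, (s ++ y :: t).
  by rewrite word_cat -hp -hq.
pose mulW (p q : Wt) : Wt := @exist _ (fun p => pb p) _ (mcl p q).
have mulWA : associative mulW.
  by move=> p q r; apply: val_inj; rewrite /= fsg_assoc.
have acl b : pb (a b) by apply/pbP; exists b, [::].
pose aW b : Wt := @exist _ (fun p => pb p) _ (acl b).
have := @evT_nat _ _ _ _ _ mulWA (@fsg_assoc S) val (fun _ _ => erefl) w aW.
rewrite -ev_evT => <-; apply/pbP; exact: valP.
Qed.

Lemma coord_prod (L : seq (coord A)) :
  exists c : coord A, forall u v, evc u c = evc v c -> agree L u v.
Proof.
elim: L => [|[S0 a0] L [[S1 a1] IH]].
  pose um (x y : unit) := tt.
  have umA : associative um by [].
  by exists (crdT umA (fun _ => tt)).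
pose pm (x y : 'I_(fsg_n S0) * 'I_(fsg_n S1)) := (fsg_mul x.1 y.1, fsg_mul x.2 y.2).
have pmA : associative pm by move=> x y z; rewrite /pm !fsg_assoc.
exists (crdT pmA (fun b => (a0 b, a1 b))) => u v.
rewrite /evc /= -/(ev u _) -/(ev v _) => E.
have Et : evT pmA u (fun b => (a0 b, a1 b)) = evT pmA v (fun b => (a0 b, a1 b)).
  by rewrite /evT E.
have h1 := @evT_nat _ _ _ _ _ pmA (@fsg_assoc S0) fst (fun _ _ => erefl).
have h2 := @evT_nat _ _ _ _ _ pmA (@fsg_assoc S1) snd (fun _ _ => erefl).
have k1 w : evT (@fsg_assoc S0) w a0 = (evT pmA w (fun b => (a0 b, a1 b))).1 by rewrite h1.
have k2 w : evT (@fsg_assoc S1) w a1 = (evT pmA w (fun b => (a0 b, a1 b))).2 by rewrite h2.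
split.
  by rewrite /evc /= -!/(ev _ _) !ev_evT !k1 Et.
by apply: IH; rewrite /evc /= -!/(ev _ _) !ev_evT !k2 Et.
Qed.

Lemma density (L : seq (coord A)) (w : Om A) : exists x s, agree L (word x s) w.
Proof.
have [[S a] hc] := coord_prod L.
have [x [s e]] := density1 a w.
by exists x, s; apply: hc.
Qed.
End Density.

Section Prov.
Variable Sg : pid -> Prop.
Variable A : finType.
Notation th := (@provable Sg A).

Lemma prov_ind (P : Om A -> Om A -> Prop) :
 (forall u v, Sigma0 Sg u v -> P u v) ->
 (forall u v w, th u v -> P u v -> th v w -> P v w -> P u w) ->
 (forall u v, (forall L, exists u' v', [/\ th u' v', P u' v', agree L u' u & agree L v' v]) -> P u v) ->
 forall u v, th u v -> P u v.
Proof.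
move=> hb ht hc; fix IH 3 => u v p.
destruct p as [u v h | u v w p1 p2 | u v h].
- exact: hb.
- exact: (ht _ _ _ p1 (IH _ _ p1) p2 (IH _ _ p2)).
- apply: hc => L.
  destruct (h L) as [u' [v' [p a1 a2]]].
  exists u', v'; split; [exact: p | exact: (IH _ _ p) | exact: a1 | exact: a2].
Qed.

Lemma th_sym u v : th u v -> th v u.
Proof.
move: u v; refine (@prov_ind (fun u v => th v u) _ _ _).
- move=> u0 v0 [q [phi [t [hq hh hc [[-> ->]|[-> ->]]]]]]; apply: pr_base;
    exists q, phi, t; split => //; tauto.
- by move=> u0 v0 w0 _ h1 _ h2; apply: pr_trans h2 h1.
- move=> u0 v0 h; apply: pr_clos => L.
  have [u' [v' [_ p a1 a2]]] := h L.
  by exists v', u'; split.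
Qed.

Lemma th_trans u v w : th u v -> th v w -> th u w.
Proof. exact: pr_trans. Qed.

Lemma th_mulr u v w : th u v -> th (om_mul u w) (om_mul v w).
Proof.
move: u v; refine (@prov_ind (fun u v => th (om_mul u w) (om_mul v w)) _ _ _).
- move=> u0 v0 [q [phi [t [hq hh hc E]]]]; apply: pr_base.
  exists q, phi, (Mu t (Lf w)); split => //=.
  by case: E => [[-> ->]|[-> ->]]; [left|right].
- by move=> u0 v0 w0 _ h1 _ h2; apply: pr_trans h1 h2.
- move=> u0 v0 h; apply: pr_clos => L.
  have [u' [v' [_ p a1 a2]]] := h L.
  exists (om_mul u' w), (om_mul v' w); split => //; apply: agree_mul => //; exact: agree_refl.
Qed.

Lemma th_mull u v w : th u v -> th (om_mul w u) (om_mul w v).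
Proof.
move: u v; refine (@prov_ind (fun u v => th (om_mul w u) (om_mul w v)) _ _ _).
- move=> u0 v0 [q [phi [t [hq hh hc E]]]]; apply: pr_base.
  exists q, phi, (Mu (Lf w) t); split => //=.
  by case: E => [[-> ->]|[-> ->]]; [left|right].
- by move=> u0 v0 w0 _ h1 _ h2; apply: pr_trans h1 h2.
- move=> u0 v0 h; apply: pr_clos => L.
  have [u' [v' [_ p a1 a2]]] := h L.
  exists (om_mul w u'), (om_mul w v'); split => //; apply: agree_mul => //; exact: agree_refl.
Qed.

Hypothesis exq : exists q, Sg q.

Lemma th_refl u : th u u.
Proof.
have [q hq] := exq.
apply: pr_base; exists q, (subst (fun _ : projT1 q => u)), (Lf u); split => //.
- exact: subst_hom.
- exact: subst_cont.
- by left.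
Qed.

Lemma th_eq u v : u = v -> th u v.
Proof. by move=> ->; exact: th_refl. Qed.

Lemma th_mul u v u' v' : th u v -> th u' v' -> th (om_mul u u') (om_mul v v').
Proof. by move=> h1 h2; apply: th_trans (th_mulr _ h1) (th_mull _ h2). Qed.

Definition contF (F : Om A -> Om A) :=
  forall c : coord A, exists L, forall w w', agree L w w' -> evc (F w) c = evc (F w') c.

Lemma contF_list F (L : seq (coord A)) : contF F ->
  exists L', forall w w', agree L' w w' -> agree L (F w) (F w').
Proof.
move=> hF; elim: L => [|c L [L' IH]]; first by exists [::].
have [Lc hc] := hF c.
exists (Lc ++ L') => w w' /agree_cat [h1 h2]; split; [exact: hc | exact: IH].
Qed.

Lemma clos_tool (F G : Om A -> Om A) : contF F -> contF G ->
  (forall x s, th (F (word x s)) (G (word x s))) -> forall w, th (F w) (G w).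
Proof.
move=> hF hG hw w; apply: pr_clos => L.
have [L1 h1] := contF_list L hF.
have [L2 h2] := contF_list L hG.
have [x [s hs]] := density (L1 ++ L2) w.
move/agree_cat: hs => [a1 a2].
by exists (F (word x s)), (G (word x s)); split; [exact: hw | exact: h1 | exact: h2].
Qed.

End Prov.

Section Elem.
Variables (T : finType) (mul : T -> T -> T) (mulA : associative mul).
Variable M : nat.
Hypothesis hM : #|T| <= M.
Local Notation om := (omg mul M).
Local Notation iv := (inv mul M).
Local Notation pw := (pw mul).

Lemma pw_shift s t k : mul (pw (mul s t) k) s = mul s (pw (mul t s) k).
Proof.
elim: k => [|k IH] /=; first by rewrite mulA.
by rewrite -!mulA [LHS]mulA IH -mulA.
Qed.

Lemma omg_shift s t : mul (om (mul s t)) s = mul s (om (mul t s)).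
Proof. exact: pw_shift. Qed.

Lemma omg_sq s : om (mul s s) = om s.
Proof.
have -> : mul s s = pw s 1 by [].
rewrite /omg.
rewrite pw_pw //.
apply: om_pwk => //; rewrite -pw_pw //; exact: om_idem.
Qed.

Lemma omg_idem s : mul (om s) (om s) = om s.
Proof. exact: om_idem. Qed.

Lemma pw_lE E s k : idem mul E -> mul E (pw (mul E s) k) = pw (mul E s) k.
Proof.
move=> hE; elim: k => [|k IH] /=; first by rewrite mulA hE.
by rewrite mulA IH.
Qed.

Lemma pw_EsE E s k : idem mul E -> pw (mul (mul E s) E) k = mul (pw (mul E s) k) E.
Proof.
move=> hE; elim: k => [|k IH] //=.
by rewrite IH -!mulA (mulA E E) hE (mulA E s E) (mulA (pw _ k)) .
Qed.

Lemma F1_elem E s : idem mul E ->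
  mul (mul (mul s E) (iv (mul (mul E s) E))) (mul E s) = mul s (om (mul E s)).
Proof.
move=> hE.
have -> : iv (mul (mul E s) E) = mul (iv (mul E s)) E by rewrite /inv pw_EsE.
have h1 : mul E (iv (mul E s)) = iv (mul E s) by rewrite /inv pw_lE.
rewrite -(inv_mul mulA hM) -!mulA; congr (mul s _).
by rewrite (mulA E) h1 (mulA E E) hE.
Qed.
End Elem.

Section OmId.
Variable A : finType.
Local Notation "x ** y" := (om_mul x y) (at level 40, left associativity).
Implicit Types u v e s : Om A.

Lemma ev_mul (u v : Om A) S (a : A -> 'I_(fsg_n S)) :
  ev (u ** v) a = fsg_mul (ev u a) (ev v a).
Proof. by []. Qed.
Lemma ev_omega (u : Om A) S (a : A -> 'I_(fsg_n S)) :
  ev (om_omega u) a = omg (@fsg_mul S) (fsg_n S) (ev u a).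
Proof. by []. Qed.
Lemma ev_inv (u : Om A) S (a : A -> 'I_(fsg_n S)) :
  ev (om_inv u) a = inv (@fsg_mul S) (fsg_n S) (ev u a).
Proof. by []. Qed.
Lemma ev_var (x : A) S (a : A -> 'I_(fsg_n S)) : ev (om_var x) a = a x.
Proof. by []. Qed.

Lemma X1 u : om_omega u ** u = u ** om_omega u.
Proof. by apply: om_ext => S a; rewrite !ev_mul ev_omega (omg_mul (@fsg_assoc S)). Qed.
Lemma X2 u : u ** om_inv u = om_omega u.
Proof. by apply: om_ext => S a; rewrite ev_mul ev_inv ev_omega (mul_inv (@fsg_assoc S) (card_fsg S)). Qed.
Lemma X2' u : om_inv u ** u = om_omega u.
Proof. by apply: om_ext => S a; rewrite ev_mul ev_inv ev_omega (inv_mul (@fsg_assoc S) (card_fsg S)). Qed.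
Lemma X3 u v : om_omega (u ** v) ** u = u ** om_omega (v ** u).
Proof. by apply: om_ext => S a; rewrite !ev_mul !ev_omega !ev_mul (omg_shift (@fsg_assoc S)). Qed.
Lemma X4 u : om_omega (u ** u) = om_omega u.
Proof. by apply: om_ext => S a; rewrite !ev_omega ev_mul (omg_sq (@fsg_assoc S) (card_fsg S)). Qed.
Lemma X5 u : om_omega u ** om_omega u = om_omega u.
Proof. by apply: om_ext => S a; rewrite ev_mul !ev_omega (omg_idem (@fsg_assoc S) (card_fsg S)). Qed.
Lemma XF1 e s : e ** e = e ->
  s ** e ** om_inv (e ** s ** e) ** (e ** s) = s ** om_omega (e ** s).
Proof.
move=> he; apply: om_ext => S a.
have hE : idem (@fsg_mul S) (ev e a) by rewrite /idem -ev_mul he.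
by rewrite !ev_mul ev_inv ev_omega !ev_mul (F1_elem (@fsg_assoc S) (card_fsg S)).
Qed.
End OmId.

Section LZ.
Variable A : finType.
Definition lzm (x y : A) := x.
Definition rzm (x y : A) := y.
Lemma lzA : associative lzm. Proof. by []. Qed.
Lemma rzA : associative rzm. Proof. by []. Qed.
Definition firstL (w : Om A) : A := evT lzA w id.
Definition lastL (w : Om A) : A := evT rzA w id.
Lemma firstL_word x s : firstL (word x s) = x.
Proof.
elim/last_ind: s => [|s y IH]; first by rewrite /firstL /word /= evT_var.
by rewrite word_rcons /firstL evT_mul.
Qed.
Lemma lastL_word x s : lastL (word x s) = last x s.
Proof.
elim/last_ind: s => [|s y IH]; first by rewrite /lastL /word /= evT_var.
by rewrite word_rcons /lastL evT_mul evT_var last_rcons.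
Qed.
Lemma firstL_var x : firstL (om_var x) = x.
Proof. exact: (firstL_word x [::]). Qed.
Lemma lastL_var x : lastL (om_var x) = x.
Proof. exact: (lastL_word x [::]). Qed.
Lemma firstL_cont : exists c : coord A, forall w w', evc w c = evc w' c -> firstL w = firstL w'.
Proof. by exists (crdT lzA id) => w w' h; rewrite /firstL /evT; move: h; rewrite /evc /= => ->. Qed.
Lemma lastL_cont : exists c : coord A, forall w w', evc w c = evc w' c -> lastL w = lastL w'.
Proof. by exists (crdT rzA id) => w w' h; rewrite /lastL /evT; move: h; rewrite /evc /= => ->. Qed.
End LZ.

Section Alg.
Variable Sg : pid -> Prop.
Variable A : finType.
Notation th := (@provable Sg A).
Local Notation "x ** y" := (om_mul x y) (at level 40, left associativity).
Implicit Types u v e s w : Om A.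
Hypothesis exq : exists q, Sg q.
Hypothesis hL1 : forall a : Om A, th (om_omega a ** a) a.
Hypothesis hL2 : forall a b : Om A, th (om_omega (a ** b) ** a) a.

Lemma thE u v : u = v -> th u v. Proof. exact: th_eq. Qed.
Lemma thS u v : th u v -> th v u. Proof. exact: th_sym. Qed.
Lemma thT u v w : th u v -> th v w -> th u w. Proof. exact: th_trans. Qed.
Lemma thM u v u' v' : th u v -> th u' v' -> th (u ** u') (v ** v').
Proof. exact: th_mul. Qed.
Lemma thR u : th u u. Proof. exact: th_refl. Qed.

Lemma L1r a : th (a ** om_omega a) a.
Proof. by rewrite -X1. Qed.

Lemma L2r s e : th (s ** om_omega (e ** s)) s.
Proof. by rewrite -X3. Qed.

Lemma F1 e s : e ** e = e -> th s (s ** e ** om_inv (e ** s ** e) ** (e ** s)).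
Proof. by move=> he; rewrite XF1 //; apply: thS; exact: L2r. Qed.

Lemma contF_id : contF (@id (Om A)).
Proof. by move=> c; exists [:: c] => w w' [h _]. Qed.

Lemma contF_mul F G : contF F -> contF G -> contF (fun w => F w ** G w).
Proof.
move=> hF hG c; have [L1 h1] := hF c; have [L2 h2] := hG c.
exists (L1 ++ L2) => w w' /agree_cat [a1 a2].
by move: (h1 _ _ a1) (h2 _ _ a2); rewrite /evc /= => -> ->.
Qed.

Lemma contF_const w0 : contF (fun _ => w0).
Proof. by move=> c; exists [::]. Qed.

Lemma contF_first (g : A -> Om A) : contF (fun w => g (firstL w)).
Proof.
have [c0 h0] := firstL_cont A.
by move=> c; exists [:: c0] => w w' [h _]; rewrite (h0 _ _ h).
Qed.

Lemma contF_last (g : A -> Om A) : contF (fun w => g (lastL w)).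
Proof.
have [c0 h0] := lastL_cont A.
by move=> c; exists [:: c0] => w w' [h _]; rewrite (h0 _ _ h).
Qed.

Definition Xo (x : A) := om_omega (om_var x).

Lemma T1 w : th w (Xo (firstL w) ** w).
Proof.
apply: (clos_tool (F := @id (Om A)) (G := fun w => Xo (firstL w) ** w)).
- exact: contF_id.
- by apply: contF_mul; [exact: (contF_first Xo) | exact: contF_id].
move=> x s; rewrite firstL_word /=.
elim/last_ind: s => [|s y IH]; first by apply: thS; exact: hL1.
rewrite word_rcons om_mulA; apply: thM => //; exact: thR.
Qed.

Lemma T2 w : th w (w ** Xo (lastL w)).
Proof.
apply: (clos_tool (F := @id (Om A)) (G := fun w => w ** Xo (lastL w))).
- exact: contF_id.
- by apply: contF_mul; [exact: contF_id | exact: (contF_last Xo)].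
move=> x s; rewrite lastL_word /=.
case/lastP: s => [|s y]; first by apply: thS; exact: L1r.
rewrite last_rcons word_rcons -om_mulA; apply: thM; first exact: thR.
by apply: thS; exact: L1r.
Qed.

End Alg.

Section Stab.
Variables (T : finType) (mul : T -> T -> T) (mulA : associative mul).
Variable M : nat.
Hypothesis hM : #|T| <= M.
Local Notation om := (omg mul M).
Definition stepv r s := om (mul (mul r s) r).
Definition lef x y := mul y x = x /\ mul x y = x.

Lemma lef_refl x : idem mul x -> lef x x. Proof. by []. Qed.
Lemma lef_trans x y z : lef x y -> lef y z -> lef x z.
Proof.
move=> [h1 h2] [h3 h4]; split.
  by rewrite -h1 mulA h3.
by rewrite -h2 -mulA h4.
Qed.
Lemma lef_anti x y : lef x y -> lef y x -> x = y.
Proof. by move=> [h1 _] [_ h4]; rewrite -h1 h4. Qed.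

Lemma step_le r s : idem mul r -> idem mul (stepv r s) /\ lef (stepv r s) r.
Proof.
move=> hr; split; first exact: om_idem.
rewrite /stepv /omg; split.
  elim: (M`!.-1) => [|k IH] /=; first by rewrite !mulA hr.
  by rewrite mulA IH.
have Pr : mul (mul (mul r s) r) r = mul (mul r s) r by rewrite -mulA hr.
elim: (M`!.-1) => [|k IH] /=; first exact: Pr.
by rewrite -mulA Pr.
Qed.

Definition blockv (l : seq T) r := foldl stepv r l.

Lemma block_le l r : idem mul r ->
  [/\ idem mul (blockv l r), lef (blockv l r) r &
      (blockv l r = r -> forall s, s \in l -> stepv r s = r)].
Proof.
elim: l r => [|s l IH] r hr /=; first by split => //.
have [i1 l1] := step_le s hr.
have [i2 l2 f2] := IH _ i1.
split => //; first exact: lef_trans l2 l1.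
move=> e t; rewrite inE => /orP [/eqP -> |tl].
  by apply: lef_anti => //; rewrite -{1}e.
have es : stepv r s = r by apply: lef_anti => //; rewrite -{1}e.
by rewrite es in f2 e; exact: f2 e t tl.
Qed.

Lemma block_fix l r : idem mul r -> (forall s, s \in l -> stepv r s = r) -> blockv l r = r.
Proof.
elim: l => [|s l IH] //= hr h.
by rewrite h ?mem_head // IH // => t tl; apply: h; rewrite inE tl orbT.
Qed.

Variable l : seq T.
Variable r0 : T.
Hypothesis hr0 : idem mul r0.
Definition chain j := iter j (blockv l) r0.

Lemma chain_idem j : idem mul (chain j).
Proof. elim: j => //= j IH; by case: (block_le l IH). Qed.

Lemma chain_le i k : i <= k -> lef (chain k) (chain i).
Proof.
move=> /subnK <-; elim: (k - i) => [|d IH]; first exact: lef_refl (chain_idem _).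
rewrite addSn /=; apply: lef_trans IH.
by case: (block_le l (chain_idem (d + i))).
Qed.

Lemma chain_stab : exists j, j <= #|T| /\ chain j.+1 = chain j.
Proof.
case: (boolP [exists j : 'I_#|T|.+1, chain j.+1 == chain j]).
  by move/existsP => [j /eqP e]; exists j; split => //; rewrite -ltnS.
move=> /existsPn hn.
have inj : injective (fun j : 'I_#|T|.+2 => chain j).
  move=> i k /= e; apply/val_inj.
  wlog lik : i k e / i < k.
    move=> W; case: (ltngtP i k) => h; [exact: W | symmetry; exact: W | exact: h].
  exfalso.
  have ib : i < #|T|.+1 by have := ltn_ord k; lia.
  have := hn (Ordinal ib).
  move/negP; apply; apply/eqP.
  apply: lef_anti; first by case: (block_le l (chain_idem i)).
  by rewrite e; apply: chain_le.
by have := leq_card _ inj; rewrite card_ord; lia.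
Qed.

Lemma chain_final j : M < j -> chain j = chain M.+1 /\
  forall s, s \in l -> stepv (chain M.+1) s = chain M.+1.
Proof.
have [j0 [j0T e0]] := chain_stab.
have kl : forall s, s \in l -> stepv (chain j0) s = chain j0.
  by case: (block_le l (chain_idem j0)) => _ _; apply; exact: e0.
have st : forall k, j0 <= k -> chain k = chain j0.
  move=> k /subnK <-; elim: (k - j0) => // d IH.
  by rewrite addSn /= IH block_fix //; exact: chain_idem.
move=> hj; rewrite !st //; lia.
Qed.
End Stab.

Lemma inmapL (X : Type) (T : eqType) (f : X -> T) (l : seq X) s :
  List.In s l -> f s \in map f l.
Proof. elim: l => //= y l IH [->|h]; rewrite inE ?eqxx //; by rewrite IH ?orbT. Qed.

Section Rho.
Variables (A : finType) (x0 : A) (Fl : seq (Om A)).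
Local Notation "x ** y" := (om_mul x y) (at level 40, left associativity).

Definition stepO (r s : Om A) := om_omega (r ** s ** r).
Definition blockO r := foldl stepO r Fl.
Definition rhoj j := iter j blockO (Xo x0).

Lemma ev_block r S (a : A -> 'I_(fsg_n S)) :
  ev (blockO r) a = blockv (@fsg_mul S) (fsg_n S) [seq ev s a | s <- Fl] (ev r a).
Proof. rewrite /blockO /blockv; elim: Fl r => //= s l IH r; exact: IH. Qed.

Lemma ev_rhoj j S (a : A -> 'I_(fsg_n S)) :
  ev (rhoj j) a = chain (@fsg_mul S) (fsg_n S) [seq ev s a | s <- Fl] (ev (Xo x0) a) j.
Proof. elim: j => //= j IH; by rewrite ev_block IH. Qed.

Lemma Xo_idem S (a : A -> 'I_(fsg_n S)) : idem (@fsg_mul S) (ev (Xo x0) a).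
Proof. by rewrite /Xo ev_omega; apply: om_idem => //; [exact: fsg_assoc | exact: card_fsg]. Qed.

Lemma rho_final S (a : A -> 'I_(fsg_n S)) j : fsg_n S < j ->
  ev (rhoj j) a = ev (rhoj (fsg_n S).+1) a /\
  forall s, List.In s Fl -> stepv (@fsg_mul S) (fsg_n S) (ev (rhoj (fsg_n S).+1) a) (ev s a)
                        = ev (rhoj (fsg_n S).+1) a.
Proof.
move=> hj.
have hr0 : idem (@fsg_mul S) (ev (Xo x0) a).
  by rewrite /Xo ev_omega; apply: om_idem => //; [exact: fsg_assoc | exact: card_fsg].
have [e1 e2] := chain_final (@fsg_assoc S) (card_fsg S) [seq ev s a | s <- Fl] hr0 hj.
rewrite !ev_rhoj; split => // s sl; apply: e2; exact: inmapL.
Qed.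

Lemma rho_nat : natural (fun S (a : A -> 'I_(fsg_n S)) => ev (rhoj (fsg_n S).+1) a).
Proof.
move=> S1 S2 h hh a /=.
have nat j b : h (ev (rhoj j) b) = ev (rhoj j) (h \o b) by rewrite /ev (proj2_sig (rhoj j) _ _ _ hh).
pose j := (maxn (fsg_n S1) (fsg_n S2)).+1.
have [f1 _] := rho_final a (j:=j) (ltac:(rewrite /j; lia)).
have [f2 _] := rho_final (h \o a) (j:=j) (ltac:(rewrite /j; lia)).
by rewrite -f1 nat f2.
Qed.

Definition rho : Om A := exist _ _ rho_nat.

Lemma rho_ev S (a : A -> 'I_(fsg_n S)) : ev rho a = ev (rhoj (fsg_n S).+1) a.
Proof. by []. Qed.

Lemma rho_idemE S (a : A -> 'I_(fsg_n S)) : idem (@fsg_mul S) (ev rho a).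
Proof.
rewrite rho_ev ev_rhoj; apply: chain_idem; [exact: fsg_assoc | exact: card_fsg | exact: Xo_idem].
Qed.

Lemma rho_idem : rho ** rho = rho.
Proof. by apply: om_ext => S a; rewrite ev_mul rho_idemE. Qed.

Lemma rho_klike S (a : A -> 'I_(fsg_n S)) s : List.In s Fl ->
  omg (@fsg_mul S) (fsg_n S) (fsg_mul (fsg_mul (ev rho a) (ev s a)) (ev rho a)) = ev rho a.
Proof.
move=> sl; have [_ e2] := rho_final a (j := (fsg_n S).+1) (ltnSn _).
exact: e2.
Qed.
End Rho.

Section Zc.
Variables (A : finType) (e : Om A).
Local Notation "x ** y" := (om_mul x y) (at level 40, left associativity).

Definition cterm (y x : A) : Om A :=
  om_inv (e ** Xo y ** e) ** (e ** (Xo y ** Xo x) ** e) ** om_inv (e ** Xo x ** e).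

Section TS.
Variables (S : fsg) (a : A -> 'I_(fsg_n S)).
Definition tm (p q : A * 'I_(fsg_n S) * A) : A * 'I_(fsg_n S) * A :=
  (p.1.1, fsg_mul (fsg_mul p.1.2 (ev (cterm p.2 q.1.1) a)) q.1.2, q.2).
Lemma tmA : associative tm.
Proof. by move=> [[x1 s1] y1] [[x2 s2] y2] [[x3 s3] y3]; rewrite /tm /= !fsg_assoc. Qed.
Definition alp (x : A) : A * 'I_(fsg_n S) * A := (x, ev (e ** om_var x ** e) a, x).
End TS.

Lemma Z_nat (w : Om A) :
  natural (fun S (a : A -> 'I_(fsg_n S)) => (evT (tmA a) w (alp a)).1.2).
Proof.
move=> S1 S2 h hh a /=.
have nat (u : Om A) b : h (ev u b) = ev u (h \o b) by rewrite /ev (proj2_sig u _ _ _ hh).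
pose H (p : A * 'I_(fsg_n S1) * A) : A * 'I_(fsg_n S2) * A := (p.1.1, h p.1.2, p.2).
have hH : forall p q, H (tm a p q) = tm (h \o a) (H p) (H q).
  have hh2 : forall x y, h (fsg_mul x y) = fsg_mul (h x) (h y) := hh.
  by move=> [[x1 s1] y1] [[x2 s2] y2]; rewrite /H /tm; cbn [fst snd]; rewrite 2!hh2 nat.
have := evT_nat (tmA a) (tmA (h \o a)) hH w (alp a).
have -> : (fun b => H (alp a b)) = alp (h \o a).
  by apply: functional_extensionality => b; rewrite /H /alp; cbn [fst snd]; rewrite nat.
by move=> <-.
Qed.

Definition Zop (w : Om A) : Om A := exist _ _ (Z_nat w).

Lemma Z_ev (w : Om A) S (a : A -> 'I_(fsg_n S)) : ev (Zop w) a = (evT (tmA a) w (alp a)).1.2.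
Proof. by []. Qed.

Lemma Z_first (w : Om A) S (a : A -> 'I_(fsg_n S)) : (evT (tmA a) w (alp a)).1.1 = firstL w.
Proof.
have := @evT_nat _ _ _ _ _ (tmA a) (@lzA A) (fun p => p.1.1) (fun _ _ => erefl) w (alp a).
by move=> ->.
Qed.

Lemma Z_last (w : Om A) S (a : A -> 'I_(fsg_n S)) : (evT (tmA a) w (alp a)).2 = lastL w.
Proof.
have := @evT_nat _ _ _ _ _ (tmA a) (@rzA A) (fun p => p.2) (fun _ _ => erefl) w (alp a).
by move=> ->.
Qed.

Lemma Zmul (w w' : Om A) : Zop (w ** w') = Zop w ** cterm (lastL w) (firstL w') ** Zop w'.
Proof.
apply: om_ext => S a; rewrite !ev_mul !Z_ev evT_mul /tm /=.
by rewrite Z_last Z_first.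
Qed.

Lemma Zvar x : Zop (om_var x) = e ** om_var x ** e.
Proof. by apply: om_ext => S a; rewrite Z_ev evT_var. Qed.

Lemma contF_Z : contF Zop.
Proof.
move=> [S a]; exists [:: crdT (tmA a) (alp a)] => w w' [h _].
move: h; rewrite /evc /crdT; cbn [projT1 projT2] => h'.
by rewrite !Z_ev /evT h'.
Qed.
End Zc.

Section Alg2.
Variable Sg : pid -> Prop.
Variable A : finType.
Notation th := (@provable Sg A).
Local Notation "x ** y" := (om_mul x y) (at level 40, left associativity).
Implicit Types u v s w : Om A.
Hypothesis exq : exists q, Sg q.
Hypothesis hL1 : forall a : Om A, th (om_omega a ** a) a.
Hypothesis hL2 : forall a b : Om A, th (om_omega (a ** b) ** a) a.
Variable e : Om A.
Hypothesis he : e ** e = e.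

Let thE := @thE Sg A exq.
Let thR := @thR Sg A exq.
Let T1 := @T1 Sg A exq hL1.
Let T2 := @T2 Sg A exq hL1.
Let F1 := fun s => @F1 Sg A hL2 e s he.

Lemma F1r f w : th (w ** f) w ->
  th w (w ** e ** om_inv (e ** f ** e) ** (e ** f)).
Proof.
move=> hw; apply: thT (thS hw) _.
apply: thT (thM (thR w) (F1 f)) _.
apply: thT (thE (_ : _ = w ** f ** e ** om_inv (e ** f ** e) ** (e ** f))) _.
  by rewrite !om_mulA.
apply: thM (thR _); apply: thM (thR _); apply: thM hw (thR _).
Qed.

Lemma F1l f w : th (f ** w) w ->
  th w (f ** e ** om_inv (e ** f ** e) ** (e ** w)).
Proof.
move=> hw; apply: thT (thS hw) _.
apply: thT (thM (F1 f) (thR w)) _.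
apply: thT (thE (_ : _ = (f ** e ** om_inv (e ** f ** e) ** e) ** (f ** w))) _.
  by rewrite !om_mulA.
apply: thT (thM (thR _) hw) _.
apply: thE; by rewrite !om_mulA.
Qed.

Lemma F3 W x : th (e ** (W ** om_var x) ** e)
   ((e ** W ** e) ** cterm e (lastL W) x ** (e ** om_var x ** e)).
Proof.
have hW := F1r (thS (T2 W)).
have hx := F1l (hL1 (om_var x)).
apply: thT (thM (thM (thR e) (thM hW hx)) (thR e)) _.
apply: thE; by rewrite /cterm !om_mulA.
Qed.

Lemma T3 w : th (Zop e w) (e ** w ** e).
Proof.
apply: (clos_tool (F := Zop e) (G := fun w => e ** w ** e)).
- exact: contF_Z.
- apply: contF_mul; last exact: contF_const.
  apply: contF_mul; [exact: contF_const | exact: contF_id].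
move=> x s; elim/last_ind: s => [|s y IH]; first by apply: thE; rewrite /word /= Zvar.
rewrite word_rcons Zmul firstL_var Zvar.
apply: thT (thM (thM IH (thR _)) (thR _)) _.
exact: thS (F3 _ _).
Qed.

Definition Cx (x : A) := Xo x ** e ** om_inv (e ** Xo x ** e).
Definition Dy (y : A) := om_inv (e ** Xo y ** e) ** (e ** Xo y).

Lemma NF w : th w (Cx (firstL w) ** (e ** w ** e) ** Dy (lastL w)).
Proof.
set X := Xo (firstL w); set Y := Xo (lastL w).
have hX : th (X ** w) w := thS (T1 w).
have hY : th (w ** Y) w := thS (T2 w).
have hA : th (w ** e) (Cx (firstL w) ** (e ** w ** e)).
  apply: thT (thM (thS hX) (thR e)) _.
  apply: thT (thE (_ : _ = X ** (w ** e))) _; first by rewrite om_mulA.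
  apply: thT (thM (F1 X) (thR _)) _.
  apply: thT (thE (_ : _ = Cx (firstL w) ** (e ** (X ** w) ** e))) _.
    by rewrite /Cx !om_mulA.
  exact: thM (thR _) (thM (thM (thR e) hX) (thR e)).
have hB : th (e ** w) ((e ** w ** e) ** Dy (lastL w)).
  apply: thT (thM (thR e) (thS hY)) _.
  apply: thT (thE (_ : _ = (e ** w) ** Y)) _; first by rewrite om_mulA.
  apply: thT (thM (thR _) (F1 Y)) _.
  apply: thT (thE (_ : _ = (e ** (w ** Y) ** e) ** Dy (lastL w))) _.
    by rewrite /Dy !om_mulA.
  exact: thM (thM (thM (thR e) hY) (thR e)) (thR _).
apply: thT (F1 w) _.
apply: thT (thM (thM hA (thR _)) hB) _.
apply: thT (thE (_ : _ = Cx (firstL w) ** ((e ** w ** e) ** om_inv (e ** w ** e) ** (e ** w ** e)) ** Dy (lastL w))) _.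
  by rewrite !om_mulA.
apply: thM (thM (thR _) _) (thR _).
by rewrite X2; exact: hL1.
Qed.

End Alg2.

Section Grp.
Variables (T : finType) (mul : T -> T -> T) (mulA : associative mul).
Variable M : nat.
Hypothesis hM : #|T| <= M.
Variable E : T.
Hypothesis hE : idem mul E.
Local Notation om := (omg mul M).
Local Notation iv := (inv mul M).

Definition hin (s : T) : bool := [&& mul E s == s, mul s E == s & om s == E].

Lemma pwE_r g k : mul g E = g -> mul (pw mul g k) E = pw mul g k.
Proof. by move=> h; elim: k => //= k IH; rewrite -mulA h. Qed.
Lemma pwE_l g k : mul E g = g -> mul E (pw mul g k) = pw mul g k.
Proof. by move=> h; elim: k => //= k IH; rewrite mulA IH. Qed.

Lemma grp_omg g y : mul E g = g -> mul g E = g -> mul g y = E -> om g = E.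
Proof.
move=> hl hr hy.
have k_eq k : mul (pw mul g k) (pw mul y k) = E.
  elim: k => // k IH; rewrite -(pw_addl mulA y k) [pw mul g k.+1]/=.
  by rewrite -mulA (mulA g y) hy mulA pwE_r.
have F0 := k_eq M`!.-1.
have i0 : idem mul (om g) by apply: om_idem.
have r0 : mul (om g) E = om g by rewrite /omg pwE_r.
by rewrite -r0 -{1}F0 mulA i0 F0.
Qed.

Lemma hinP s : hin s -> [/\ mul E s = s, mul s E = s & om s = E].
Proof. by case/and3P => /eqP -> /eqP -> /eqP ->. Qed.

Lemma hin_E : hin E.
Proof. by apply/and3P; split; apply/eqP => //; rewrite /omg pw_idem. Qed.

Lemma hin_mulinv s : hin s -> mul s (iv s) = E.
Proof. by case/hinP => _ _ h; rewrite mul_inv. Qed.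

Lemma hin_inv s : hin s -> hin (iv s).
Proof.
case/hinP => hl hr ho.
have l : mul E (iv s) = iv s by rewrite /inv pwE_l.
have r : mul (iv s) E = iv s by rewrite /inv pwE_r.
apply/and3P; split; apply/eqP => //.
by apply: (grp_omg (y := s)) => //; rewrite inv_mul.
Qed.

Lemma hin_mul s t : hin s -> hin t -> hin (mul s t).
Proof.
move=> hs ht; have [sl sr so] := hinP hs; have [tl tr to] := hinP ht.
have l : mul E (mul s t) = mul s t by rewrite mulA sl.
have r : mul (mul s t) E = mul s t by rewrite -mulA tr.
apply/and3P; split; apply/eqP => //.
apply: (grp_omg (y := mul (iv t) (iv s))) => //.
by rewrite -mulA (mulA t) hin_mulinv // mulA sr hin_mulinv.
Qed.

Lemma hin_EsE s : om (mul (mul E s) E) = E -> hin (mul (mul E s) E).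
Proof.
move=> h; apply/and3P; split; apply/eqP => //.
  by rewrite !mulA hE.
by rewrite -mulA hE.
Qed.

Lemma idem_mid t P : hin t -> hin P -> mul (mul t P) t = t -> mul t P = E.
Proof.
move=> ht hP e.
have [_ Pr _] := hinP hP.
have h := congr1 (fun z => mul z (iv t)) e; simpl in h.
by rewrite -mulA (hin_mulinv ht) -mulA Pr in h.
Qed.

Lemma mid_uniq t t' P : hin t -> hin t' -> hin P -> mul t P = E -> mul t' P = E -> t = t'.
Proof.
move=> ht ht' hP e e'.
have [_ tr _] := hinP ht; have [_ tr' _] := hinP ht'.
by rewrite -tr -tr' -(hin_mulinv hP) !mulA e e'.
Qed.
End Grp.

Lemma mem_In (T : eqType) (x : T) (s : seq T) : x \in s -> List.In x s.
Proof. elim: s => //= y s IH; rewrite inE => /orP [/eqP ->|h]; [left | right; exact: IH] => //. Qed.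

Lemma In_catl (X : Type) (x : X) (s1 s2 : seq X) : List.In x s1 -> List.In x (s1 ++ s2).
Proof. elim: s1 => //= y s IH [->|h]; [by left | right; exact: IH]. Qed.
Lemma In_catr (X : Type) (x : X) (s1 s2 : seq X) : List.In x s2 -> List.In x (s1 ++ s2).
Proof. elim: s1 => //= y s IH h; right; exact: IH. Qed.
Lemma In_map (X Y : Type) (f : X -> Y) (x : X) (s : seq X) : List.In x s -> List.In (f x) (map f s).
Proof. elim: s => //= y s IH [->|h]; [by left | right; exact: IH]. Qed.
Lemma In_fm (X Y Z : Type) (f : X -> Y -> Z) l1 l2 y x :
  List.In y l1 -> List.In x l2 -> List.In (f y x) (flatten (map (fun y => map (f y) l2) l1)).
Proof.
elim: l1 => //= y0 l IH [<-|h] hx; [apply: In_catl; exact: In_map | apply: In_catr; exact: IH].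
Qed.

Definition Fl (A : finType) : seq (Om A) :=
  map (@om_var A) (enum A) ++
  flatten (map (fun y => map (fun x => om_mul (Xo y) (Xo x)) (enum A)) (enum A)).

Lemma Fl_var (A : finType) (x : A) : List.In (om_var x) (Fl A).
Proof. apply: In_catl; apply: In_map; apply: mem_In; exact: mem_enum. Qed.

Lemma Fl_pair (A : finType) (y x : A) : List.In (om_mul (Xo y) (Xo x)) (Fl A).
Proof.
apply: In_catr; apply: (In_fm (fun y x => om_mul (Xo y) (Xo x))); apply: mem_In; exact: mem_enum.
Qed.

Section T0c.
Variables (A : finType) (e : Om A) (S : fsg) (a : A -> 'I_(fsg_n S)).
Local Notation mulS := (@fsg_mul S).
Local Notation E := (ev e a).
Hypothesis hE : idem mulS E.
Hypothesis hK : forall s, List.In s (Fl A) ->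
  omg mulS (fsg_n S) (mulS (mulS E (ev s a)) E) = E.
Local Notation hinS := (hin mulS (fsg_n S) E).
Let mA := @fsg_assoc S.
Let cS := card_fsg S.

Lemma hin_alp x : hinS (ev (om_mul (om_mul e (om_var x)) e) a).
Proof. by apply: hin_EsE => //; exact: (hK (Fl_var x)). Qed.

Lemma K2 y x : hinS (mulS (mulS E (mulS (ev (Xo y) a) (ev (Xo x) a))) E).
Proof. by apply: hin_EsE => //; exact: (hK (Fl_pair y x)). Qed.

Lemma hin_ct y x : hinS (ev (cterm e y x) a).
Proof.
have fy : mulS (ev (Xo y) a) (ev (Xo y) a) = ev (Xo y) a.
  by rewrite /Xo ev_omega; apply: om_idem.
have fx : mulS (ev (Xo x) a) (ev (Xo x) a) = ev (Xo x) a.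
  by rewrite /Xo ev_omega; apply: om_idem.
have e1 : hinS (mulS (mulS E (ev (Xo y) a)) E) by move: (K2 y y); rewrite fy.
have e3 : hinS (mulS (mulS E (ev (Xo x) a)) E) by move: (K2 x x); rewrite fx.
change (hinS (mulS (mulS (inv mulS (fsg_n S) (mulS (mulS E (ev (Xo y) a)) E))
   (mulS (mulS E (mulS (ev (Xo y) a) (ev (Xo x) a))) E))
   (inv mulS (fsg_n S) (mulS (mulS E (ev (Xo x) a)) E)))).
apply: hin_mul => //; first apply: hin_mul => //.
- exact: hin_inv.
- exact: K2.
- exact: hin_inv.
Qed.

Definition Hs := {s : 'I_(fsg_n S) | hinS s}.
Definition Pm y x : Hs := @exist _ (fun s => hinS s) _ (hin_ct y x).
Definition T0 := (A * Hs * A)%type.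

Lemma t0_cl (p q : T0) : hinS (mulS (mulS (val p.1.2) (val (Pm p.2 q.1.1))) (val q.1.2)).
Proof. by apply: hin_mul => //; [apply: hin_mul => //; exact: valP | exact: valP]. Qed.

Definition t0m (p q : T0) : T0 := (p.1.1, @exist _ (fun s => hinS s) _ (t0_cl p q), q.2).

Lemma t0A : associative t0m.
Proof.
move=> [[x1 s1] y1] [[x2 s2] y2] [[x3 s3] y3]; rewrite /t0m /=.
by congr (_, _, _); apply: val_inj; rewrite /= !mA.
Qed.

Definition al0 (x : A) : T0 := (x, @exist _ (fun s => hinS s) _ (hin_alp x), x).
Definition iota (p : T0) : A * 'I_(fsg_n S) * A := (p.1.1, val p.1.2, p.2).
Lemma iota_hom p q : iota (t0m p q) = tm e a (iota p) (iota q).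
Proof. by []. Qed.
Lemma iota_al0 : (fun x => iota (al0 x)) = alp e a.
Proof. by []. Qed.

Local Notation omT := (omg t0m #|{: T0}|).

Lemma pw_comp p k : (pw t0m p k).1.1 = p.1.1 /\ (pw t0m p k).2 = p.2.
Proof. by elim: k => //= k [h1 h2]; rewrite /t0m /=. Qed.

Lemma omT_comp p : (omT p).1.1 = p.1.1 /\ (omT p).2 = p.2.
Proof. exact: pw_comp. Qed.

Lemma omT_mid p : mulS (val (omT p).1.2) (val (Pm (omT p).2 (omT p).1.1)) = E.
Proof.
have i : idem t0m (omT p) by apply: om_idem => //; exact: t0A.
apply: (idem_mid mA cS); [exact: valP | exact: valP |].
by have := congr1 (fun z => val z.1.2) i.
Qed.

Lemma LT1 p : t0m (omT p) p = p.
Proof.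
have [c1 c2] := omT_comp p; have m := omT_mid p; rewrite c1 c2 in m.
case: p c1 c2 m => [[x s] y] c1 c2 m.
rewrite /t0m c1; congr (_, _, _); apply: val_inj => /=.
by rewrite c2 m; case/hinP: (valP s).
Qed.

Lemma LT2 p r : t0m (omT (t0m p r)) p = p.
Proof.
have [c1 c2] := omT_comp (t0m p r); have m := omT_mid (t0m p r); rewrite c1 c2 in m.
case: p c1 c2 m => [[x s] y] c1 c2 m.
rewrite /t0m c1; congr (_, _, _); apply: val_inj => /=.
rewrite c2 /=; move: m; rewrite /= => ->; by case/hinP: (valP s).
Qed.

Lemma LT3 p r : omT (t0m (t0m p r) p) = omT p.
Proof.
have [c1 c2] := omT_comp (t0m (t0m p r) p); have m := omT_mid (t0m (t0m p r) p).
have [d1 d2] := omT_comp p; have m' := omT_mid p.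
rewrite c1 c2 in m; rewrite d1 d2 in m'.
move: c1 c2 d1 d2 m m'.
case: (omT (t0m (t0m p r) p)) => [[x1 s1] y1]; case: (omT p) => [[x2 s2] y2] /=.
move=> -> -> -> -> m m'; congr (_, _, _); apply: val_inj.
exact: (mid_uniq mA cS (valP s1) (valP s2) (valP (Pm p.2 p.1.1)) m m').
Qed.
End T0c.

Lemma ev_pow (B : finType) (w : Om B) S (a : B -> 'I_(fsg_n S)) n :
  ev (om_pow w n) a = pw (@fsg_mul S) (ev w a) n.
Proof. by elim: n => //= n <-. Qed.

Lemma omega_is (B : finType) (w : Om B) : is_omega w (om_omega w).
Proof.
move=> [S a]; exists (fsg_n S) => k hk.
change (ev (om_pow w (k`!).-1) a = ev (om_omega w) a); rewrite ev_pow ev_omega.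
have hk' : #|'I_(fsg_n S)| <= k by rewrite card_ord.
apply: (om_pwk (@fsg_assoc S) (card_fsg S)).
exact: (om_idem (@fsg_assoc S) hk').
Qed.

Lemma ev_agree (B : finType) (L : seq (coord B)) (s : nat -> Om B) e :
  (forall c, exists N, forall k, N <= k -> evc (s k) c = evc e c) ->
  exists N, forall k, N <= k -> agree L (s k) e.
Proof.
move=> h; elim: L => [|c L [N IH]]; first by exists 0.
have [N1 h1] := h c.
exists (maxn N N1) => k hk; split; [apply: h1 | apply: IH]; lia.
Qed.

Lemma hom_omega (B T : finType) (mul : T -> T -> T) (mulA : associative mul)
  (f : Om B -> T) w e : is_homT mul f -> is_contT f -> is_omega w e ->
  f e = omg mul #|T| (f w).
Proof.
move=> hf cf ho.
have fp n : f (om_pow w n) = pw mul (f w) n by elim: n => //= n IH; rewrite hf IH.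
have [L hL] := cf e.
have [N hN] := ev_agree L ho.
set k := maxn N #|T|.
rewrite -(hL (om_pow w (k`!).-1)); last by apply: hN; lia.
rewrite fp; apply: om_pwk => //.
by apply: (om_idem mulA (M := k)); lia.
Qed.

Lemma models_Sigma (T : finType) (mul : T -> T -> T) (mulA : associative mul) :
  (forall p, mul (omg mul #|T| p) p = p) ->
  (forall p r, omg mul #|T| (mul (mul p r) p) = omg mul #|T| p) ->
  models mul SigmaSet.
Proof.
move=> l1 l3 p [[e1 [e2 [h1 h2 ->]]] | [e [h ->]]] /= f hf cf.
- by rewrite (hom_omega mulA hf cf h1) (hom_omega mulA hf cf h2) !hf l3.
- by rewrite hf (hom_omega mulA hf cf h) l1.
Qed.

Lemma models_Gamma (T : finType) (mul : T -> T -> T) (mulA : associative mul) :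
  (forall p r, mul (omg mul #|T| (mul p r)) p = p) ->
  models mul GammaSet.
Proof.
move=> l2 p [e [h ->]] /= f hf cf.
by rewrite hf (hom_omega mulA hf cf h) hf l2.
Qed.

Theorem hstrong_gen (Sg : pid -> Prop) :
  (exists q, Sg q) ->
  (forall (A : finType) (a : Om A), provable Sg (om_mul (om_omega a) a) a) ->
  (forall (A : finType) (a b : Om A), provable Sg (om_mul (om_omega (om_mul a b)) a) a) ->
  (forall (T : finType) (mul : T -> T -> T) (mulA : associative mul),
     (forall p, mul (omg mul #|T| p) p = p) ->
     (forall p r, mul (omg mul #|T| (mul p r)) p = p) ->
     (forall p r, omg mul #|T| (mul (mul p r) p) = omg mul #|T| p) ->
     models mul Sg) ->
  h_strong Sg.
Proof.
move=> exq hL1 hL2 hmod A u v H.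
have [x0 _] := density [::] u.
pose e := rho x0 (Fl A).
have he : om_mul e e = e := rho_idem x0 (Fl A).
have trip S (a : A -> 'I_(fsg_n S)) : evT (tmA e a) u (alp e a) = evT (tmA e a) v (alp e a).
  have hE := rho_idemE x0 (Fl A) a.
  have hK : forall s, List.In s (Fl A) ->
      omg (@fsg_mul S) (fsg_n S) (fsg_mul (fsg_mul (ev e a) (ev s a)) (ev e a)) = ev e a.
    by move=> s hs; exact: rho_klike.
  have hm := hmod _ _ (t0A hE hK) (LT1 hE hK) (LT2 hE hK) (LT3 hE hK).
  have eq0 := H _ _ (t0A hE hK) hm _ (evT_homT (t0A hE hK) (al0 hE hK)) (evT_cont (t0A hE hK) (al0 hE hK)).
  have k w : evT (tmA e a) w (alp e a) = iota (evT (t0A hE hK) w (al0 hE hK)).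
    by rewrite (evT_nat (t0A hE hK) (tmA e a) (iota_hom hE hK)).
  by rewrite !k eq0.
have Zeq : Zop e u = Zop e v by apply: om_ext => S a; rewrite !Z_ev trip.
pose S0 := fsgT (@lzA A).
pose a0 := fun b : A => (enum_rank b : 'I_(fsg_n S0)).
have fe : firstL u = firstL v by rewrite -(Z_first e u a0) -(Z_first e v a0) trip.
have le : lastL u = lastL v by rewrite -(Z_last e u a0) -(Z_last e v a0) trip.
apply: thT (NF exq (hL1 A) (hL2 A) he u) _.
apply: thT (thM (thM (thR exq _) (thS (T3 exq (hL1 A) (hL2 A) he u))) (thR exq _)) _.
rewrite Zeq fe le.
apply: thT (thM (thM (thR exq _) (T3 exq (hL1 A) (hL2 A) he v)) (thR exq _)) _.
exact: thS (NF exq (hL1 A) (hL2 A) he v).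
Qed.

Lemma subst_mul (B A : finType) (sg : B -> Om A) u v :
  subst sg (om_mul u v) = om_mul (subst sg u) (subst sg v).
Proof. exact: subst_hom. Qed.

Definition qS1 : pid := mkpid (om_omega (om_mul (om_mul (om_var true) (om_var false)) (om_var true)))
                              (om_omega (om_var true)).
Definition qS2 : pid := mkpid (om_mul (om_omega (om_var tt)) (om_var tt)) (om_var tt).
Definition qG : pid := mkpid (om_mul (om_omega (om_mul (om_var true) (om_var false))) (om_var true))
                             (om_var true).

Lemma SqS1 : SigmaSet qS1.
Proof. left; do 2 eexists; split; [exact: omega_is | exact: omega_is | by []]. Qed.
Lemma SqS2 : SigmaSet qS2.
Proof. right; eexists; split; [exact: omega_is | by []]. Qed.
Lemma GqG : GammaSet qG.
Proof. eexists; split; [exact: omega_is | by []]. Qed.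

Section Inst.
Variable A : finType.
Local Notation "x ** y" := (om_mul x y) (at level 40, left associativity).
Implicit Types a b : Om A.

Lemma S_L1 a : provable SigmaSet (om_omega a ** a) a.
Proof.
apply: pr_base; exists qS2, (subst (fun _ : unit => a)), (Hole A); split.
- exact: SqS2.
- exact: subst_hom.
- exact: subst_cont.
- by left; rewrite /= subst_mul subst_omega subst_var.
Qed.

Lemma S_L3 a b : provable SigmaSet (om_omega (a ** b ** a)) (om_omega a).
Proof.
apply: pr_base; exists qS1, (subst (fun b0 : bool => if b0 then a else b)), (Hole A); split.
- exact: SqS1.
- exact: subst_hom.
- exact: subst_cont.
- by left; rewrite /= !subst_omega !subst_mul !subst_var.
Qed.

Lemma G_L2 a b : provable GammaSet (om_omega (a ** b) ** a) a.
Proof.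
apply: pr_base; exists qG, (subst (fun b0 : bool => if b0 then a else b)), (Hole A); split.
- exact: GqG.
- exact: subst_hom.
- exact: subst_cont.
- by left; rewrite /= !subst_mul subst_omega !subst_mul !subst_var.
Qed.

Let exS : exists q, SigmaSet q := ex_intro _ _ SqS2.
Let exG : exists q, GammaSet q := ex_intro _ _ GqG.

Lemma S_L2 a b : provable SigmaSet (om_omega (a ** b) ** a) a.
Proof.
pose z := a ** b ** a.
have i : provable SigmaSet (om_omega z ** a) a.
  by apply: thT (thM (S_L3 a b) (thR exS a)) (S_L1 a).
have ii : om_omega z = (a ** b) ** (a ** om_inv z) by rewrite -X2 !om_mulA.
have iv : provable SigmaSet (om_omega (a ** b) ** om_omega z) (om_omega z).
  rewrite ii om_mulA; apply: thM (S_L1 _) (thR exS _).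
apply: thT (thM (thR exS _) (thS i)) _.
rewrite om_mulA; apply: thT (thM iv (thR exS _)) i.
Qed.

Lemma G_L1 a : provable GammaSet (om_omega a ** a) a.
Proof. by rewrite -X4; exact: G_L2. Qed.
End Inst.

Theorem theorem9p3 : h_strong SigmaSet /\ h_strong GammaSet.
Proof.
split.
- apply: hstrong_gen.
  + exact: ex_intro _ _ SqS2.
  + exact: S_L1.
  + exact: S_L2.
  + move=> T mul mulA l1 l2 l3; exact: models_Sigma.
- apply: hstrong_gen.
  + exact: ex_intro _ _ GqG.
  + exact: G_L1.
  + exact: G_L2.
  + move=> T mul mulA l1 l2 l3; exact: models_Gamma.
Qed.
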